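(* Let $\alpha\in(0,\tfrac12)$. Then $h$, regarded as a function on $\mathbb T$ via $h(e^{i\theta})=h(\theta)$, satisfies $$|h(z_1)-h(z_2)|\le\cosh(\pi)\,d(z_1,z_2)^{1-2\alpha}\quad\text{for all }z_1,z_2\in\mathbb T.$$
   Context: $\mathbb T$ is the unit circle; for $\theta\in\mathbb R$, $|\theta|_o$ is the absolute value of the representative of $\theta$ mod $2\pi$ in $(-\pi,\pi]$; $d(e^{i\theta_1},e^{i\theta_2})=|\theta_1-\theta_2|_o$ is the geodesic distance. $h(\theta)=\sin\theta/|\theta|_o^{2\alpha}$ for $\theta\notin2\pi\mathbb Z$ and $h(\theta)=0$ for $\theta\in2\pi\mathbb Z$ (a $2\pi$-periodic function). *)

(* Defs.v *)
From Stdlib Require Import Reals Lra ZArith ClassicalEpsilon.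
Open Scope R_scope.

(* x ^ y for x >= 0 real exponent, with 0 ^ y = 0 (y > 0 in our use). *)
Definition rpow (x y : R) : R := if Req_EM_T x 0 then 0 else Rpower x y.

(* representative of theta mod 2pi in (-pi, pi] *)
Definition orep (theta : R) : R :=
  theta - 2 * PI * IZR (1 - up (- ((theta - PI) / (2 * PI))))%Z.
(* 1 - up (-t) = ceil t, so the result lies in (-pi, pi]. *)

Definition oabs (theta : R) : R := Rabs (orep theta).

Definition in2piZ (theta : R) : Prop := exists k : Z, theta = 2 * PI * IZR k.

Definition h (alpha : R) (theta : R) : R :=
  match excluded_middle_informative (in2piZ theta) with
  | left _ => 0
  | right _ => sin theta / rpow (oabs theta) (2 * alpha)
  end.

(* geodesic distance between e^{i t1} and e^{i t2} *)
Definition dT (t1 t2 : R) : R := oabs (t1 - t2).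

(* Main.v *)
Require Import Defs.
From Stdlib Require Import Reals Lra Lia ZArith ClassicalEpsilon.
Open Scope R_scope.

Lemma PI_gt3 : 3 < PI.
Proof. generalize PI2_3_2; lra. Qed.

Lemma sin_bnd_pos x : 0 <= x -> - x <= sin x <= x.
Proof.
  intros Hx. destruct (Req_dec x 0) as [->|Hn].
  - rewrite sin_0; lra.
  - assert (Hp : 0 < x) by lra. split.
    + destruct (Rle_dec x PI).
      * generalize (sin_ge_0 x Hx r); lra.
      * generalize (SIN_bound x) PI_gt3; lra.
    + generalize (sin_lt_x x Hp); lra.
Qed.

Lemma sin_abs x : Rabs (sin x) <= Rabs x.
Proof.
  destruct (Rle_dec 0 x).
  - rewrite (Rabs_right x) by lra. apply Rabs_le. apply sin_bnd_pos; auto.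
  - rewrite (Rabs_left x) by lra. apply Rabs_le.
    generalize (sin_bnd_pos (-x)); rewrite sin_neg; intros H; lra.
Qed.

Lemma sin_lip x y : Rabs (sin x - sin y) <= Rabs (x - y).
Proof.
  rewrite form4, !Rabs_mult.
  assert (H1 : Rabs (cos ((x + y) / 2)) <= 1).
  { apply Rabs_le. generalize (COS_bound ((x+y)/2)); lra. }
  assert (H2 : Rabs (sin ((x - y) / 2)) <= Rabs ((x - y)/2)) by apply sin_abs.
  rewrite Rabs_right by lra.
  replace ((x - y)/2) with ((x-y) * /2) in H2 by (unfold Rdiv; ring).
  rewrite Rabs_mult, (Rabs_right (/2)) in H2 by lra.
  assert (0 <= Rabs (cos ((x + y) / 2))) by apply Rabs_pos.
  assert (0 <= Rabs (sin ((x - y) / 2))) by apply Rabs_pos.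
  nra.
Qed.

Lemma sin_periodZ x k : sin (x + 2 * IZR k * PI) = sin x.
Proof.
  destruct (Z_le_gt_dec 0 k).
  - rewrite <- (Z2Nat.id k) by lia. rewrite <- INR_IZR_INZ. apply sin_period.
  - replace k with (- Z.of_nat (Z.to_nat (- k)))%Z by lia.
    rewrite opp_IZR, <- INR_IZR_INZ.
    rewrite <- (sin_period (x + 2 * - INR (Z.to_nat (- k)) * PI) (Z.to_nat (-k))).
    f_equal; ring.
Qed.

Lemma orep_eq t : exists c : Z, orep t = t + 2 * IZR c * PI.
Proof. unfold orep. eexists (- _)%Z. rewrite opp_IZR. ring. Qed.

Lemma orep_range t : - PI < orep t <= PI.
Proof.
  unfold orep. set (q := (t - PI) / (2 * PI)).
  assert (Hq : 2 * PI * q = t - PI) by (unfold q; field; generalize PI_gt3; lra).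
  destruct (archimed (- q)) as [H1 H2].
  rewrite minus_IZR.
  set (U := IZR (up (- q))) in *.
  generalize PI_gt3; intros HP.
  assert (2 * PI * U > 2 * PI * (- q)) by (apply Rmult_lt_compat_l; lra).
  assert (2 * PI * (U - - q) <= 2 * PI * 1) by (apply Rmult_le_compat_l; lra).
  split; nra.
Qed.

Lemma orep_uniq x k : - PI < x <= PI -> orep (x + 2 * IZR k * PI) = x.
Proof.
  intros Hx. destruct (orep_eq (x + 2 * IZR k * PI)) as [c Hc].
  generalize (orep_range (x + 2 * IZR k * PI)); rewrite Hc; intros Hr.
  assert (Hz : IZR (k + c) = 0).
  { assert (-1 < IZR (k + c) < 1).
    { rewrite plus_IZR. generalize PI_gt3; intros HP. split; nra. }
    destruct H as [Ha Hb]. apply lt_IZR in Ha. apply lt_IZR in Hb.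
    replace (k + c)%Z with 0%Z by lia. reflexivity. }
  rewrite plus_IZR in Hz.
  replace c with (c + 0)%Z by lia. rewrite plus_IZR. 
  replace (x + 2 * IZR k * PI + 2 * (IZR c + IZR 0) * PI) with (x + 2 * (IZR k + IZR c) * PI) by (simpl; ring).
  rewrite Hz. ring.
Qed.

Lemma orep_shift x k : orep (x + 2 * IZR k * PI) = orep x.
Proof.
  destruct (orep_eq x) as [c Hc].
  replace (x + 2 * IZR k * PI) with (orep x + 2 * IZR (k - c) * PI)
    by (rewrite Hc, minus_IZR; ring).
  apply orep_uniq, orep_range.
Qed.

Lemma cosh_ge3 : 3 <= cosh PI.
Proof.
  unfold cosh. generalize PI_gt3; intros HP.
  assert (H1 : 1 + PI/2 < exp (PI/2)) by (apply exp_ineq1; lra).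
  replace (exp PI) with (exp (PI/2) * exp (PI/2)) by (rewrite <- exp_plus; f_equal; field).
  generalize (exp_pos (- PI)); nra.
Qed.

Lemma Rabs_div a b : Rabs (a / b) = Rabs a / Rabs b.
Proof. unfold Rdiv. rewrite Rabs_mult, Rabs_inv. reflexivity. Qed.

Lemma rpow_pos_eq x c : 0 < x -> rpow x c = Rpower x c.
Proof. intros. unfold rpow. destruct (Req_EM_T x 0); [lra|auto]. Qed.

Lemma rpow_nonneg x c : 0 <= rpow x c.
Proof. unfold rpow. destruct (Req_EM_T x 0); [lra|]. unfold Rpower. left; apply exp_pos. Qed.

Lemma rpow_mono a b c : 0 <= c -> 0 <= a <= b -> rpow a c <= rpow b c.
Proof.
  intros Hc Hab. destruct (Req_dec a 0) as [->|Ha].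
  - unfold rpow at 1. destruct (Req_EM_T 0 0); [|lra]. apply rpow_nonneg.
  - rewrite !rpow_pos_eq by lra. apply Rle_Rpower_l; lra.
Qed.

Lemma Rpower_pos x c : 0 < Rpower x c.
Proof. unfold Rpower; apply exp_pos. Qed.

Lemma div_Rpower x b : 0 < x -> x / Rpower x b = Rpower x (1 - b).
Proof.
  intros Hx. assert (Hp := Rpower_pos x b).
  assert (E : Rpower x (1 - b) * Rpower x b = x).
  { rewrite <- Rpower_plus. replace (1 - b + b) with 1 by ring. apply Rpower_1; auto. }
  replace (x / Rpower x b) with (Rpower x (1-b) * Rpower x b / Rpower x b) by (rewrite E; reflexivity).
  field. lra.
Qed.

Lemma helperH a x z b c : 0 <= b -> 0 < z <= x -> 0 <= c -> 0 <= a <= c * z ->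
  a / Rpower x b <= c * rpow z (1 - b).
Proof.
  intros Hb Hz Hc Ha. rewrite rpow_pos_eq by lra. rewrite <- div_Rpower by lra.
  assert (HZ := Rpower_pos z b). assert (HX := Rpower_pos x b).
  assert (HZX : Rpower z b <= Rpower x b) by (apply Rle_Rpower_l; lra).
  unfold Rdiv. rewrite <- Rmult_assoc.
  apply Rmult_le_compat; try lra.
  - left; apply Rinv_0_lt_compat; lra.
  - apply Rinv_le_contravar; lra.
Qed.

Definition G (b x : R) : R := sin x / rpow (Rabs x) b.

Lemma G0 b : G b 0 = 0.
Proof. unfold G. rewrite sin_0. unfold Rdiv; ring. Qed.

Lemma Gopp b x : G b (- x) = - G b x.
Proof. unfold G. rewrite sin_neg, Rabs_Ropp. unfold Rdiv; ring. Qed.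

Lemma Gpos b x : 0 < x -> G b x = sin x / Rpower x b.
Proof. intros. unfold G. rewrite Rabs_right by lra. rewrite rpow_pos_eq; auto. Qed.

Lemma L1a b x : 0 < b < 1 -> 0 <= x <= PI -> Rabs (G b x) <= rpow x (1 - b).
Proof.
  intros Hb Hx. destruct (Req_dec x 0) as [->|Hn].
  - rewrite G0, Rabs_R0. apply rpow_nonneg.
  - rewrite Gpos by lra. rewrite Rabs_div, (Rabs_right (Rpower x b)) by (left; apply Rpower_pos).
    replace (rpow x (1-b)) with (1 * rpow x (1-b)) by ring.
    apply helperH; try lra. split; [apply Rabs_pos|].
    generalize (sin_abs x); rewrite (Rabs_right x) by lra; lra.
Qed.

Lemma L1b b x : 0 < b < 1 -> 0 <= x <= PI -> Rabs (G b x) <= rpow (PI - x) (1 - b).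
Proof.
  intros Hb Hx. destruct (Rle_dec x (PI - x)).
  - apply Rle_trans with (rpow x (1-b)). apply L1a; auto. apply rpow_mono; lra.
  - destruct (Req_dec x PI) as [->|Hn].
    + unfold G. rewrite sin_PI. unfold Rdiv. rewrite Rmult_0_l, Rabs_R0. apply rpow_nonneg.
    + rewrite Gpos by lra. rewrite Rabs_div, (Rabs_right (Rpower x b)) by (left; apply Rpower_pos).
      replace (rpow (PI - x) (1-b)) with (1 * rpow (PI - x) (1-b)) by ring.
      apply helperH; try lra. split; [apply Rabs_pos|].
      rewrite <- sin_PI_x. generalize (sin_abs (PI - x)); rewrite (Rabs_right (PI - x)) by lra; lra.
Qed.

Lemma L2 b x y : 0 < b < 1 -> 0 <= y <= x -> x <= PI ->
  Rabs (G b x - G b y) <= 3 * rpow (x - y) (1 - b).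
Proof.
  intros Hb Hy Hx.
  assert (HP0 := rpow_nonneg (x - y) (1 - b)).
  destruct (Req_dec y 0) as [->|Hy0].
  { rewrite G0. rewrite !Rminus_0_r in *. assert (0 <= x <= PI) by lra. generalize (L1a b x Hb H). lra. }
  destruct (Req_dec x y) as [->|Hxy].
  { rewrite Rminus_diag, Rabs_R0. lra. }
  set (z := x - y). assert (Hz : 0 < z) by (unfold z; lra).
  rewrite !Gpos by lra.
  assert (HX := Rpower_pos x b). assert (HY := Rpower_pos y b).
  destruct (Rle_dec (2 * y) x).
  - apply Rle_trans with (Rabs (sin x / Rpower x b) + Rabs (sin y / Rpower y b)).
    { unfold Rminus. rewrite <- (Rabs_Ropp (sin y / Rpower y b)). apply Rabs_triang. }
    rewrite !Rabs_div, (Rabs_right (Rpower x b)), (Rabs_right (Rpower y b)) by lra.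
    assert (A1 : Rabs (sin x) / Rpower x b <= 2 * rpow z (1 - b)).
    { apply helperH; try lra. unfold z; lra. split; [apply Rabs_pos|].
      generalize (sin_abs x); rewrite (Rabs_right x) by lra. unfold z; lra. }
    assert (A2 : Rabs (sin y) / Rpower y b <= rpow z (1 - b)).
    { apply Rle_trans with (rpow y (1-b)).
      - generalize (L1a b y Hb (conj (proj1 Hy) (Rle_trans _ _ _ (proj2 Hy) Hx))).
        rewrite Gpos, Rabs_div, (Rabs_right (Rpower y b)) by lra. auto.
      - apply rpow_mono; unfold z; lra. }
    lra.
  - replace (sin x / Rpower x b - sin y / Rpower y b) with
      ((sin x - sin y) / Rpower x b + sin y * (/ Rpower x b - / Rpower y b)) by (field; lra).
    apply Rle_trans with (Rabs ((sin x - sin y) / Rpower x b) + Rabs (sin y * (/ Rpower x b - / Rpower y b))).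
    { apply Rabs_triang. }
    assert (A1 : Rabs ((sin x - sin y) / Rpower x b) <= 1 * rpow z (1 - b)).
    { rewrite Rabs_div, (Rabs_right (Rpower x b)) by lra.
      apply helperH; try lra. unfold z; lra. split; [apply Rabs_pos|].
      generalize (sin_lip x y); rewrite (Rabs_right (x - y)) by lra. unfold z; lra. }
    assert (A2 : Rabs (sin y * (/ Rpower x b - / Rpower y b)) <= 1 * rpow z (1 - b)).
    { assert (HXY : Rpower y b <= Rpower x b) by (apply Rle_Rpower_l; lra).
      assert (HI : / Rpower x b <= / Rpower y b) by (apply Rinv_le_contravar; lra).
      rewrite Rabs_mult, (Rabs_left1 (/ Rpower x b - / Rpower y b)) by lra.
      assert (Hs : Rabs (sin y) <= y) by (generalize (sin_abs y); rewrite (Rabs_right y) by lra; lra).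
      apply Rle_trans with (y * (/ Rpower y b - / Rpower x b)).
      { apply Rmult_le_compat; try lra. apply Rabs_pos. }
      apply Rle_trans with (z / Rpower y b).
      2:{ apply helperH; try lra. unfold z; lra. }
      set (X := Rpower x b) in *. set (Y := Rpower y b) in *.
      assert (HAB : y / Y <= x / X).
      { unfold X, Y. rewrite !div_Rpower by lra. apply Rle_Rpower_l; lra. }
      set (A := x / X) in *. set (B := y / Y) in *.
      assert (Ex : x = A * X) by (unfold A; field; lra).
      assert (Ey : y = B * Y) by (unfold B; field; lra).
      assert (HB0 : 0 <= B) by (unfold B; apply Rle_mult_inv_pos; lra).
      unfold z. rewrite Ex, Ey.
      apply Rmult_le_reg_r with (X * X * Y * Y). 
      { apply Rmult_lt_0_compat; [apply Rmult_lt_0_compat|]; try lra; apply Rmult_lt_0_compat; lra. }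
      replace (B * Y * (/ Y - / X) * (X * X * Y * Y)) with (B * Y * X * Y * (X - Y)) by (field; lra).
      replace ((A * X - B * Y) / Y * (X * X * Y * Y)) with ((A * X - B * Y) * X * X * Y) by (field; lra).
      clearbody A B X Y.
      assert (0 <= (A - B) * X * X * X * Y).
      { repeat apply Rmult_le_pos; lra. }
      assert (0 <= B * X * Y * (X - Y) * (X - Y)).
      { repeat apply Rmult_le_pos; lra. }
      nra. }
    unfold z in *; lra.
Qed.

Lemma orep_k w k y : - PI < y <= PI -> w = y + 2 * IZR k * PI -> orep w = y.
Proof. intros Hy ->. apply orep_uniq; auto. Qed.

Lemma abs_orep_small w : - PI <= w <= PI -> Rabs (orep w) = Rabs w.
Proof.
  intros Hw. destruct (Req_dec w (- PI)) as [->|Hn].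
  - rewrite (orep_k (- PI) (-1) PI). rewrite Rabs_Ropp; auto.
    generalize PI_gt3; lra. simpl; ring.
  - rewrite (orep_k w 0 w); auto. lra. simpl; ring.
Qed.

Lemma Gneg_abs b x : Rabs (G b x) = Rabs (G b (- x)).
Proof. rewrite Gopp, Rabs_Ropp; auto. Qed.

Lemma mainM b u v : 0 < b < 1 -> - PI < u <= PI -> - PI < v <= PI ->
  Rabs (G b u - G b v) <= 3 * rpow (Rabs (orep (u - v))) (1 - b).
Proof.
  intros Hb Hu Hv. generalize PI_gt3; intros HP.
  assert (Hc : 0 <= 1 - b) by lra.
  assert (Tri : forall p q, Rabs (p - q) <= Rabs p + Rabs q).
  { intros p q. unfold Rminus. rewrite <- (Rabs_Ropp q). apply Rabs_triang. }
  destruct (Rle_dec 0 u) as [Hu0|Hu0]; destruct (Rle_dec 0 v) as [Hv0|Hv0].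
  - rewrite abs_orep_small by lra.
    destruct (Rle_dec v u).
    + rewrite (Rabs_right (u - v)) by lra. apply L2; lra.
    + rewrite Rabs_minus_sym, (Rabs_minus_sym u v), (Rabs_right (v - u)) by lra. apply L2; lra.
  - destruct (Rle_dec (u - v) PI).
    + rewrite abs_orep_small by lra. rewrite (Rabs_right (u - v)) by lra.
      eapply Rle_trans. apply Tri. rewrite (Gneg_abs b v).
      assert (Rabs (G b u) <= rpow (u - v) (1 - b)).
      { eapply Rle_trans. apply L1a; lra. apply rpow_mono; lra. }
      assert (Rabs (G b (-v)) <= rpow (u - v) (1 - b)).
      { eapply Rle_trans. apply L1a; lra. apply rpow_mono; lra. }
      assert (0 <= rpow (u - v) (1 - b)) by apply rpow_nonneg. lra.
    + rewrite (orep_k (u - v) 1 (u - v - 2 * PI)) by (simpl; lra).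
      rewrite (Rabs_left (u - v - 2 * PI)) by lra.
      eapply Rle_trans. apply Tri. rewrite (Gneg_abs b v).
      assert (Rabs (G b u) <= rpow (- (u - v - 2 * PI)) (1 - b)).
      { eapply Rle_trans. apply L1b; lra. apply rpow_mono; lra. }
      assert (Rabs (G b (-v)) <= rpow (- (u - v - 2 * PI)) (1 - b)).
      { eapply Rle_trans. apply L1b; lra. apply rpow_mono; lra. }
      assert (0 <= rpow (- (u - v - 2 * PI)) (1 - b)) by apply rpow_nonneg. lra.
  - destruct (Rle_dec (- PI) (u - v)).
    + rewrite abs_orep_small by lra. rewrite (Rabs_left1 (u - v)) by lra.
      eapply Rle_trans. apply Tri. rewrite (Gneg_abs b u).
      assert (Rabs (G b (-u)) <= rpow (- (u - v)) (1 - b)).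
      { eapply Rle_trans. apply L1a; lra. apply rpow_mono; lra. }
      assert (Rabs (G b v) <= rpow (- (u - v)) (1 - b)).
      { eapply Rle_trans. apply L1a; lra. apply rpow_mono; lra. }
      assert (0 <= rpow (- (u - v)) (1 - b)) by apply rpow_nonneg. lra.
    + rewrite (orep_k (u - v) (-1) (u - v + 2 * PI)) by (simpl; lra).
      rewrite (Rabs_right (u - v + 2 * PI)) by lra.
      eapply Rle_trans. apply Tri. rewrite (Gneg_abs b u).
      assert (Rabs (G b (-u)) <= rpow (u - v + 2 * PI) (1 - b)).
      { eapply Rle_trans. apply L1b; lra. apply rpow_mono; lra. }
      assert (Rabs (G b v) <= rpow (u - v + 2 * PI) (1 - b)).
      { eapply Rle_trans. apply L1b; lra. apply rpow_mono; lra. }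
      assert (0 <= rpow (u - v + 2 * PI) (1 - b)) by apply rpow_nonneg. lra.
  - rewrite abs_orep_small by lra.
    replace (G b u - G b v) with (- (G b (-u) - G b (-v))) by (rewrite !Gopp; ring).
    rewrite Rabs_Ropp.
    destruct (Rle_dec v u).
    + rewrite Rabs_minus_sym, (Rabs_right (u - v)) by lra.
      replace (u - v) with (- v - - u) by ring.
      apply L2; lra.
    + replace (Rabs (u - v)) with (- u - - v) by (rewrite (Rabs_left (u - v)); lra).
      apply L2; lra.
Qed.

Lemma h_eq alpha t : h alpha t = G (2 * alpha) (orep t).
Proof.
  destruct (orep_eq t) as [c Hc].
  assert (Hs : sin (orep t) = sin t) by (rewrite Hc; apply sin_periodZ).
  unfold h, G, oabs. rewrite Hs.
  destruct (excluded_middle_informative (in2piZ t)) as [[k Hk]|]; auto.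
  replace (sin t) with 0. unfold Rdiv; ring.
  rewrite Hk. rewrite <- sin_0 at 1. rewrite <- (sin_periodZ 0 k). f_equal; ring.
Qed.

Theorem mainTheorem14 (alpha : R) (Ha : 0 < alpha < 1 / 2) :
  forall t1 t2 : R,
    Rabs (h alpha t1 - h alpha t2) <= cosh PI * rpow (dT t1 t2) (1 - 2 * alpha).
Proof.
  intros t1 t2. rewrite !h_eq.
  destruct (orep_eq t1) as [c1 H1]. destruct (orep_eq t2) as [c2 H2].
  assert (Hd : dT t1 t2 = Rabs (orep (orep t1 - orep t2))).
  { unfold dT, oabs. f_equal. rewrite <- (orep_shift (t1 - t2) (c1 - c2)).
    f_equal. rewrite H1, H2, minus_IZR. ring. }
  rewrite Hd.
  eapply Rle_trans. apply mainM; try lra; apply orep_range.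
  apply Rmult_le_compat_r. apply rpow_nonneg. apply cosh_ge3.
Qed.
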